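(* Let $H$ be a finite nilpotent group, with Sylow $p$-subgroups $H_p$ for $p$ in the set $\pi$ of primes dividing $|H|$, so $H=\prod_{p\in\pi}H_p$. Suppose each $H_p$ is metacyclic with a metacyclic factorization $H_p=B_pA_p$ ($A_p$, $B_p$ cyclic, $A_p\trianglelefteq H_p$) such that the family $\mathcal{F}_{H_p}$ consisting of $A_p$, $B_p$ and the conjugates of $B_p$ in $H_p$ is regular and independent in $H_p$ and $H_p$ is its active sum. Let $\mathcal{F}_H=\bigcup_{p\in\pi}\mathcal{F}_{H_p}$. Then $H$ is the active sum of $\mathcal{F}_H$.
   Context: For a group $G$ and a family $\mathcal{F}$ of distinct subgroups that generates $G$ and is closed under conjugation, the active sum $S$ of $\mathcal{F}$ is the free product of the members of $\mathcal{F}$ divided by the normal subgroup generated by all elements $h^{-1}\cdot g\cdot h\cdot (g^h)^{-1}$ with $h\in F_1$, $g\in F_2$, $F_1,F_2\in\mathcal{F}$, where $g^h=h^{-1}gh$ is regarded as an element of the factor $h^{-1}F_2h\in\mathcal{F}$; the inclusions induce a canonical surjection $\varphi:S\to G$ and ''$G$ is the active sum of $\mathcal{F}$'' means $\varphi$ is an isomorphism. A (discrete) family is regular iff $[F,N_G(F)]=F\cap G'$ for all $F\in\mathcal{F}$; it is independent iff for a set $\mathcal{T}$ of representatives of conjugacy classes of its members the canonical map $\bigoplus_{F\in\mathcal{T}}F/(F\cap G')\to G/G'$ is an isomorphism. (Such factorizations of each $H_p$ exist by the paper's result on metacyclic $p$-groups.) *)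

(* Defs.v *)
From HB Require Import structures.
From mathcomp Require Import all_boot all_fingroup all_solvable.
Set Implicit Arguments. Unset Strict Implicit. Unset Printing Implicit Defensive.
Import GroupScope.

(* An arbitrary (possibly infinite) group, used as target of the universal
   property defining the active sum (the active sum may a priori be infinite). *)
Record Grp := {
  gcar :> Type;
  gmul : gcar -> gcar -> gcar;
  gone : gcar;
  ginv : gcar -> gcar;
  gmulA : forall x y z, gmul x (gmul y z) = gmul (gmul x y) z;
  gmul1 : forall x, gmul gone x = x;
  gmulV : forall x, gmul (ginv x) x = gone }.

Section ActiveSum.
Variable gT : finGroupType.

Definition hom_on (K : Grp) (F : {set gT}) (f : gT -> K) : Prop :=
  {in F &, forall x y, f (x * y) = gmul (f x) (f y)}.

Definition conj_closed_gen_family (G : {group gT}) (Fam : {set {group gT}}) : Prop :=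
  [/\ forall F, F \in Fam -> F \subset G,
      forall F x, F \in Fam -> x \in G -> (F :^ x)%G \in Fam
    & <<\bigcup_(F in Fam) F>> = G].

(* Compatible families of homomorphisms out of the factors of the free product,
   i.e. those killing h^-1 g h (g^h)^-1 for h in F1, g in F2, g^h in F2^h. *)
Definition compatible_family (K : Grp) (Fam : {set {group gT}})
    (f : {group gT} -> gT -> K) : Prop :=
  (forall F, F \in Fam -> hom_on F (f F)) /\
  (forall F1 F2 h g, F1 \in Fam -> F2 \in Fam -> h \in F1 -> g \in F2 ->
     f (F2 :^ h)%G (g ^ h) = gmul (gmul (ginv (f F1 h)) (f F2 g)) (f F1 h)).

(* G is the active sum of Fam: the canonical map from the free product modulo
   the conjugation relations to G is an isomorphism, i.e. G (with the
   inclusions) satisfies the universal property of that quotient. *)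
Definition is_active_sum (G : {group gT}) (Fam : {set {group gT}}) : Prop :=
  conj_closed_gen_family G Fam /\
  forall (K : Grp) (f : {group gT} -> gT -> K),
    compatible_family Fam f ->
    exists phi : gT -> K,
      [/\ hom_on G phi,
          (forall F, F \in Fam -> {in F, forall x, phi x = f F x})
        & forall psi : gT -> K, hom_on G psi ->
            (forall F, F \in Fam -> {in F, forall x, psi x = f F x}) ->
            {in G, forall x, psi x = phi x}].

Definition regular_family (G : {group gT}) (Fam : {set {group gT}}) : Prop :=
  forall F : {group gT}, F \in Fam -> [~: F, 'N_G(F)] = F :&: G^`(1).

Definition conj_class_reps (G : {group gT}) (Fam T : {set {group gT}}) : Prop :=
  T \subset Fam /\
  forall F, F \in Fam ->
    exists! F' : {group gT}, F' \in T /\ exists2 x, x \in G & F = (F' :^ x)%G.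

(* Independent: for a set T of representatives, the canonical map
   (+)_{F in T} F/(F :&: G') -> G/G', (x_F) |-> prod_F x_F G', is an isomorphism
   (it is a homomorphism; we state surjectivity and triviality of the kernel). *)
Definition independent_family (G : {group gT}) (Fam : {set {group gT}}) : Prop :=
  exists T : {set {group gT}}, conj_class_reps G Fam T /\
  (forall y, y \in G -> exists x : {group gT} -> gT,
      (forall F, F \in T -> x F \in F) /\
      coset G^`(1) y = \prod_(F in T) coset G^`(1) (x F)) /\
  (forall x : {group gT} -> gT, (forall F, F \in T -> x F \in F) ->
      \prod_(F in T) coset G^`(1) (x F) = 1 ->
      forall F, F \in T -> x F \in F :&: G^`(1)).

End ActiveSum.

Definition metacyc_family (gT : finGroupType) (P A B : {group gT}) : {set {group gT}} :=
  A |: [set (B :^ x)%G | x in P].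

(* Main.v *)
Require Import Defs.
From HB Require Import structures.
From mathcomp Require Import all_boot all_fingroup all_solvable.
From Stdlib Require Import ClassicalEpsilon.
Set Implicit Arguments. Unset Strict Implicit. Unset Printing Implicit Defensive.
Import GroupScope.


Section GrpLemmas.
Variable K : Grp.
Local Notation "x ** y" := (gmul x y) (at level 40, left associativity).
Local Notation "1'" := (gone K).

Lemma gmulVr (x : K) : x ** ginv x = 1'.
Proof.
set y := x ** ginv x.
have yy : y ** y = y by rewrite /y -gmulA (gmulA (ginv x)) gmulV gmul1.
by rewrite -[y]gmul1 -(gmulV y) -gmulA yy.
Qed.

Lemma gmul1r (x : K) : x ** 1' = x.
Proof. by rewrite -(gmulV x) gmulA gmulVr gmul1. Qed.

Lemma gcancel (a b c : K) : a ** b = a ** c -> b = c.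
Proof.
by move=> e; rewrite -[b]gmul1 -[c]gmul1 -(gmulV a) -!gmulA e.
Qed.

Definition gcomm (x y : K) := x ** y = y ** x.

Lemma gcomm_conj (a c : K) : c = ginv a ** c ** a -> gcomm a c.
Proof.
move=> e; rewrite /gcomm {1}e !gmulA gmulVr gmul1 //.
Qed.

Lemma gcommMl (a b c : K) : gcomm a c -> gcomm b c -> gcomm (a ** b) c.
Proof. by rewrite /gcomm=> e1 e2; rewrite -gmulA e2 !gmulA e1. Qed.

Lemma gcommMr (a b c : K) : gcomm c a -> gcomm c b -> gcomm c (a ** b).
Proof. by rewrite /gcomm=> e1 e2; rewrite gmulA e1 -gmulA e2 gmulA. Qed.

Lemma gcomm1 (a : K) : gcomm 1' a.
Proof. by rewrite /gcomm gmul1 gmul1r. Qed.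

Lemma gcommC (a b : K) : gcomm a b -> gcomm b a.
Proof. by move=> e; rewrite /gcomm e. Qed.

Definition gprodl (s : seq nat) (g : nat -> K) := foldr (fun p acc => g p ** acc) 1' s.

Lemma gprodl_comm s g c : (forall p, p \in s -> gcomm (g p) c) -> gcomm (gprodl s g) c.
Proof.
elim: s => [|p s IH] H /=; first exact: gcomm1.
apply: gcommMl; first by apply: H; rewrite inE eqxx.
by apply: IH => q qs; apply: H; rewrite inE qs orbT.
Qed.

Lemma gprodl_split s a b : uniq s ->
  (forall p q, p \in s -> q \in s -> p != q -> gcomm (b p) (a q)) ->
  gprodl s (fun p => a p ** b p) = gprodl s a ** gprodl s b.
Proof.
elim: s => [|p s IH] /= us H; first by rewrite gmul1.
case/andP: us => ps us.
rewrite IH //; last by move=> x y xs ys; apply: H; rewrite inE ?xs ?ys orbT.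
have c : gcomm (b p) (gprodl s a).
  apply: gcommC; apply: gprodl_comm => q qs; apply: gcommC; apply: H; rewrite ?inE ?eqxx ?qs ?orbT //.
  by apply/eqP=> e; rewrite e qs in ps.
by rewrite -!gmulA (gmulA (b p)) c !gmulA.
Qed.

Lemma gprodl_eq s g1 g2 : {in s, g1 =1 g2} -> gprodl s g1 = gprodl s g2.
Proof.
elim: s => [|p s IH] //= H; rewrite H ?inE ?eqxx // IH // => q qs.
by apply: H; rewrite inE qs orbT.
Qed.

Lemma gprodl_one s : gprodl s (fun _ => 1') = 1'.
Proof. by elim: s => //= x t ->; rewrite gmul1. Qed.

Lemma gprodl_single s g p : uniq s -> p \in s ->
  (forall q, q \in s -> q != p -> g q = 1') -> gprodl s g = g p.
Proof.
elim: s => [|r s IH] //= /andP[rs us]; rewrite inE => /orP[/eqP e|ps] H.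
  subst r.
  rewrite (_ : gprodl s g = 1') ?gmul1r //.
  rewrite -(gprodl_one s); apply: gprodl_eq => q qs; apply: H; rewrite ?inE ?qs ?orbT //.
  by apply: contraNneq rs => e; move: qs; rewrite e.
rewrite H ?inE ?eqxx // ?gmul1; last by apply: contraNneq rs => e; move: ps; rewrite e.
by rewrite IH // => q qs; apply: H; rewrite inE qs orbT.
Qed.

End GrpLemmas.


Section Elts.
Variables (gT : finGroupType).

Lemma prod_constt_seq (s : seq nat) (x : gT) : uniq s ->
  [pred q | q \in s].-elt x -> \prod_(p <- s) x.`_p = x.
Proof.
elim: s x => [|p s IH] x /=.
  move=> _ hx; rewrite big_nil.
  have h1 : [pred q | q \in [::]]^'.-elt x by apply: sub_p_elt hx => q.
  by rewrite -(constt_p_elt hx); apply/esym/constt1P.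
case/andP=> ps us hx; rewrite big_cons.
have hy : [pred q | q \in s].-elt x.`_p^'.
  have hp' : p^'.-elt x.`_p^' := p_elt_constt _ _.
  have hy0 : [pred q | q \in p :: s].-elt x.`_p^'.
    exact: (mem_p_elt hx (cycle_constt _ _)).
  apply: sub_in_pnat hy0 => q qpi; rewrite !inE => /orP[/eqP e|] //.
  by move: (pnatPpi hp' qpi); rewrite !inE e eqxx.
transitivity (x.`_p * x.`_p^'); last exact: consttC. congr (_ * _). rewrite -[RHS](IH _ us hy).
rewrite big_seq [RHS]big_seq; apply: eq_bigr => q qs.
rewrite sub_in_constt // => r _; rewrite !inE => /eqP ->.
by apply: contraNneq ps => <-.
Qed.

Variables (H : {group gT}).
Hypothesis nilH : nilpotent H.

Lemma constt_in (rho : nat_pred) x : x \in H -> x.`_rho \in H.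
Proof. by move=> Hx; rewrite -cycle_subG in Hx; apply: (subsetP Hx); apply: cycle_constt. Qed.

Lemma memO (rho : nat_pred) x : x \in H -> (x \in 'O_rho(H)) = rho.-elt x.
Proof. by move=> Hx; apply: mem_normal_Hall (nilpotent_pcore_Hall _ nilH) (pcore_normal _ _) Hx. Qed.

Lemma constt_O (rho : nat_pred) x : x \in H -> x.`_rho \in 'O_rho(H).
Proof. by move=> Hx; rewrite memO ?constt_in ?p_elt_constt. Qed.

Lemma commO (rho : nat_pred) u v : u \in 'O_rho(H) -> v \in 'O_rho^'(H) -> commute u v.
Proof.
case/dprodP: (nilpotent_pcoreC rho nilH) => _ _ cOO _ Ou Ov.
by apply/esym; apply: (centP (subsetP cOO v Ov)).
Qed.

Lemma consttM_H (rho : nat_pred) x y : x \in H -> y \in H ->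
  (x * y).`_rho = x.`_rho * y.`_rho.
Proof.
move=> Hx Hy.
have e : x * y = (x.`_rho * y.`_rho) * (x.`_rho^' * y.`_rho^').
  rewrite -{1}(consttC rho x) -{1}(consttC rho y) !mulgA; congr (_ * _).
  rewrite -!mulgA; congr (_ * _).
  exact: (esym (commO (constt_O rho Hy) (constt_O rho^' Hx))).
have Oa : x.`_rho * y.`_rho \in 'O_rho(H) by apply: groupM; apply: constt_O.
have Ob : x.`_rho^' * y.`_rho^' \in 'O_rho^'(H) by apply: groupM; apply: constt_O.
rewrite e consttM; last exact: commO Oa Ob.
rewrite constt_p_elt; last exact: mem_p_elt (pcore_pgroup _ _) Oa.
have hb : (x.`_rho^' * y.`_rho^').`_rho = 1.
  by apply/constt1P; exact: mem_p_elt (pcore_pgroup _ _) Ob.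
by rewrite hb mulg1.
Qed.

Lemma prod_constt_H x : x \in H -> \prod_(p <- primes #|H|) x.`_p = x.
Proof.
move=> Hx; apply: prod_constt_seq; first exact: primes_uniq.
exact: pnat_dvd (order_dvdG Hx) (pnat_pi (cardG_gt0 H)).
Qed.

End Elts.


Lemma mem_bigcup_seq (T : finType) (s : seq nat) (S : nat -> {set T}) x :
  (x \in \bigcup_(p <- s) S p) = has (fun p => x \in S p) s.
Proof. by elim: s => [|p s IH]; rewrite ?big_nil ?big_cons ?inE //= IH. Qed.

Lemma hom_one (gT : finGroupType) (K : Grp) (G : {group gT}) (psi : gT -> K) :
  hom_on G psi -> psi 1 = gone K.
Proof.
move=> hp; apply: (@gcancel K (psi 1)); rewrite gmul1r -hp ?mulg1 //.
Qed.

Lemma hom_prod (gT : finGroupType) (K : Grp) (G : {group gT}) (psi : gT -> K)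
  (s : seq nat) (g : nat -> gT) : hom_on G psi -> (forall p, p \in s -> g p \in G) ->
  psi (\prod_(p <- s) g p) = gprodl s (fun p => psi (g p)).
Proof.
move=> hp; elim: s => [|p s IH] Hs; first by rewrite big_nil /=; exact: hom_one hp.
rewrite big_cons /= hp; first last.
- by rewrite big_seq; apply: group_prod => q qs; apply: Hs; rewrite inE qs orbT.
- by apply: Hs; rewrite inE eqxx.
by rewrite IH // => q qs; apply: Hs; rewrite inE qs orbT.
Qed.


Theorem lemma4p3 (gT : finGroupType) (H : {group gT})
  (P A B : nat -> {group gT}) :
  nilpotent H ->
  (forall p, p \in primes #|H| ->
     [/\ P p \in 'Syl_p(H),
         [/\ cyclic (A p), cyclic (B p), A p <| P p
            & (B p * A p)%g = P p :> {set gT}],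
         regular_family (P p) (metacyc_family (P p) (A p) (B p)),
         independent_family (P p) (metacyc_family (P p) (A p) (B p))
       & is_active_sum (P p) (metacyc_family (P p) (A p) (B p))]) ->
  is_active_sum H (\bigcup_(p <- primes #|H|) metacyc_family (P p) (A p) (B p)).
Proof.
move=> nilH hyp.
have upi : uniq (primes #|H|) := primes_uniq _.
set pi := primes #|H| in hyp upi *.
set Fam := fun p => metacyc_family (P p) (A p) (B p).
rewrite -/(\bigcup_(p <- pi) Fam p).
set U := \bigcup_(p <- pi) Fam p.
have memU F : F \in U -> exists2 p, p \in pi & F \in Fam p.
  by rewrite /U mem_bigcup_seq => /hasP.
have UFam F p : p \in pi -> F \in Fam p -> F \in U.
  by move=> pp FF; rewrite /U mem_bigcup_seq; apply/hasP; exists p.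
have ePO p : p \in pi -> P p :=: 'O_p(H).
  move=> pp; have [sylP _ _ _ _] := hyp p pp; rewrite inE in sylP.
  exact: nilpotent_Hall_pcore nilH sylP.
have actP p : p \in pi -> is_active_sum (P p) (Fam p).
  by move=> pp; have [_ _ _ _ h] := hyp p pp.
have sPH p : p \in pi -> P p \subset H.
  by move=> pp; rewrite (ePO p pp) pcore_sub.
have sFP p F : p \in pi -> F \in Fam p -> F \subset P p.
  by move=> pp FF; have [[hs _ _] _] := actP p pp; apply: hs.
have cPP p q u v : p \in pi -> q \in pi -> p != q -> u \in P p -> v \in P q -> commute u v.
  move=> pp qp pq Pu Pv.
  have Hv : v \in H by apply: (subsetP (sPH q qp)).
  apply: (commO nilH (rho := p)); first by rewrite -(ePO p pp).
  rewrite memO //; apply: (@sub_p_elt _ q); last first.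
    by apply: (mem_p_elt (pcore_pgroup q H)); move: Pv; rewrite (ePO q qp).
  by move=> r; rewrite !inE /= => /eqP ->; rewrite eq_sym.
have xpP p x : p \in pi -> x \in H -> x.`_p \in P p.
  by move=> pp Hx; rewrite (ePO p pp); apply: constt_O.
split.
  split.
  - by move=> F /memU [p pp FF]; apply: subset_trans (sFP p F pp FF) (sPH p pp).
  - move=> F x /memU [p pp FF] Hx.
    have [[_ cl _] _] := actP p pp.
    have -> : (F :^ x)%G = (F :^ x.`_p)%G.
      apply: group_inj => /=; rewrite -{1}(consttC p x) conjsgM.
      apply/normP; apply: (subsetP (cent_sub _)); apply/centP => y Fy.
      apply/esym; apply: (commO nilH (rho := p)); last exact: constt_O.
      rewrite -(ePO p pp); apply: (subsetP (sFP p _ pp (cl F _ FF (xpP p x pp Hx)))).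
      exact: Fy.
    by apply: (UFam _ p pp); apply: cl => //; apply: xpP.
  - apply/eqP; rewrite eqEsubset; apply/andP; split.
      rewrite gen_subG; apply/bigcupsP => F /memU [p pp FF].
      exact: subset_trans (sFP p F pp FF) (sPH p pp).
    apply/subsetP => x Hx; rewrite -(prod_constt_H Hx) big_seq.
    apply: group_prod => p pp.
    have [[_ _ gen] _] := actP p pp.
    have : x.`_p \in P p by apply: xpP.
    rewrite -gen; apply: (subsetP (genS _)); apply/bigcupsP => F FF.
    by apply: bigcup_sup; apply: UFam FF.
move=> K f [fhom fconj].
have compp p : p \in pi -> compatible_family (Fam p) f.
  move=> pp; split; first by move=> F FF; apply: fhom; apply: (UFam F p pp FF).
  by move=> F1 F2 h g F1F F2F; apply: fconj; apply: (UFam _ p pp).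
pose Spec p (phi : gT -> K) :=
  [/\ hom_on (P p) phi,
      (forall F, F \in Fam p -> {in F, forall x, phi x = f F x})
    & forall psi : gT -> K, hom_on (P p) psi ->
        (forall F, F \in Fam p -> {in F, forall x, psi x = f F x}) ->
        {in P p, forall x, psi x = phi x}].
have ex p : exists phi : gT -> K, p \in pi -> Spec p phi.
  case pp: (p \in pi); last by exists (fun _ => gone K).
  have [_ u] := actP p pp; have [phi hphi] := u K f (compp p pp).
  by exists phi.
pose Phi p := proj1_sig (constructive_indefinite_description _ (ex p)).
have PhiP p : p \in pi -> Spec p (Phi p) := proj2_sig (constructive_indefinite_description _ (ex p)).
have BF p : p \in pi -> B p \in Fam p.
  move=> pp; apply/setU1P; right; apply/imsetP; exists 1; first exact: group1.
  by apply: group_inj; rewrite /= conjsg1.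
have AF p : p \in pi -> A p \in Fam p by move=> pp; apply/setU1P; left.
have PhiAB p u : p \in pi -> u \in P p -> exists2 b, b \in B p & exists2 a, a \in A p &
    Phi p u = gmul (f (B p) b) (f (A p) a).
  move=> pp Pu; have [_ [_ _ _ BA] _ _ _] := hyp p pp.
  move: Pu; rewrite -BA => /mulsgP [b a Bb Aa ->].
  have [hP agr _] := PhiP p pp.
  exists b => //; exists a => //.
  rewrite hP; first by rewrite (agr _ (BF p pp)) // (agr _ (AF p pp)).
    exact: (subsetP (sFP p _ pp (BF p pp))).
  exact: (subsetP (sFP p _ pp (AF p pp))).
have fcomm p q F1 F2 h g : p \in pi -> q \in pi -> p != q -> F1 \in Fam p -> F2 \in Fam q ->
    h \in F1 -> g \in F2 -> gcomm (f F1 h) (f F2 g).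
  move=> pp qp pq F1F F2F hF gF.
  have Ph : h \in P p := subsetP (sFP p _ pp F1F) h hF.
  have Pg : g \in P q := subsetP (sFP q _ qp F2F) g gF.
  have e := fconj F1 F2 h g (UFam _ p pp F1F) (UFam _ q qp F2F) hF gF.
  have e1 : (F2 :^ h)%G = F2.
    apply: group_inj => /=; apply/normP; apply: (subsetP (cent_sub _)).
    apply/centP => y Fy; apply: (cPP p q) => //; exact: (subsetP (sFP q _ qp F2F)).
  have e2 : g ^ h = g.
    by apply/conjg_fixP/commgP; apply/esym; apply: (cPP p q).
  rewrite e1 e2 in e; exact: gcomm_conj e.
have Phicomm p q u v : p \in pi -> q \in pi -> p != q -> u \in P p -> v \in P q ->
    gcomm (Phi p u) (Phi q v).
  move=> pp qp pq Pu Pv.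
  have [b Bb [a Aa ->]] := PhiAB p u pp Pu.
  have [b' Bb' [a' Aa' ->]] := PhiAB q v qp Pv.
  by apply: gcommMl; apply: gcommMr; apply: (fcomm p q) => //;
    rewrite ?BF ?AF.
have Phi1 p : p \in pi -> Phi p 1 = gone K.
  by move=> pp; have [hP _ _] := PhiP p pp; apply: hom_one hP.
exists (fun x => gprodl pi (fun p => Phi p x.`_p)); split.
- move=> x y Hx Hy /=.
  rewrite -gprodl_split //; last first.
    by move=> p q pp qp pq; apply: Phicomm => //; apply: xpP.
  apply: gprodl_eq => p pp /=.
  have [hP _ _] := PhiP p pp.
  by rewrite (consttM_H nilH) // hP //; apply: xpP.
- move=> F /memU [p pp FF] x Fx /=.
  have Px : x \in P p := subsetP (sFP p _ pp FF) x Fx.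
  have pex : p.-elt x.
    by apply: (mem_p_elt (pcore_pgroup p H)); move: Px; rewrite (ePO p pp).
  rewrite (gprodl_single upi pp).
    have [_ agr _] := PhiP p pp; by rewrite constt_p_elt // (agr F FF).
  move=> q qp qnp; rewrite (_ : x.`_q = 1) ?Phi1 //.
  apply/constt1P; apply: sub_p_elt pex => r; rewrite !inE /= => /eqP ->.
  by rewrite eq_sym.
- move=> psi psiH psiF x Hx /=.
  rewrite -{1}(prod_constt_H Hx) (hom_prod psiH); last first.
    by move=> p _; apply: constt_in.
  apply: gprodl_eq => p pp.
  have [_ _ uniq_p] := PhiP p pp.
  apply: uniq_p; last exact: xpP.
    move=> a b Pa Pb; apply: psiH; exact: (subsetP (sPH p pp)).
  by move=> F FF; apply: psiF; apply: UFam FF.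
Qed.
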